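(* Let $P$ be a Poisson tensor on $\mathbb{R}^3$, let $H\in C^\infty(\mathbb{R}^3)$, let $S\in C^\infty(\mathbb{R}^3)$ satisfy $PdS=0$, and let $g$ be the symmetric tensor with components $g^{ij}=H^iH^j-\delta^{ij}\sum_k H^kH^k$. If $x$ is a regular equilibrium of the system $\dot{x}=PdH+gdS$, then either $x$ is a critical point of $H$, or the level sets of $S$ and of $H$ through $x$ are tangent to each other at $x$.
   Context: $\mathbb{R}^3$ carries the standard Euclidean metric, used to identify tangent and cotangent spaces with $\mathbb{R}^3$; $H^i=H_i=\partial H/\partial x^i$. A Poisson tensor is a skew-symmetric bivector field satisfying the Jacobi identity. A regular equilibrium is an equilibrium point $x$ with $P(x)\neq 0$. *)

(* Defs.v *)
From Stdlib Require Import Reals.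
From Coquelicot Require Import Coquelicot.
Open Scope R_scope.

Definition V := (R * R * R)%type.

Inductive idx := I0 | I1 | I2.

Definition sum3 (f : idx -> R) : R := f I0 + f I1 + f I2.

Definition shift (x : V) (i : idx) (t : R) : V :=
  match x with (a, b, c) =>
    match i with
    | I0 => (a + t, b, c)
    | I1 => (a, b + t, c)
    | I2 => (a, b, c + t)
    end
  end.

Definition partial (i : idx) (f : V -> R) (x : V) : R :=
  Derive (fun t => f (shift x i t)) 0.

Definition cont3 (f : V -> R) : Prop := forall x : V, continuous f x.

Fixpoint smoothN (n : nat) (f : V -> R) : Prop :=
  match n with
  | O => cont3 f
  | S m => cont3 f /\
           (forall i x, ex_derive (fun t => f (shift x i t)) 0) /\
           (forall i, smoothN m (partial i f))
  end.

Definition smooth (f : V -> R) : Prop := forall n, smoothN n f.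

Definition poisson_tensor (P : idx -> idx -> V -> R) : Prop :=
  (forall i j, smooth (P i j)) /\
  (forall i j x, P i j x = - P j i x) /\
  (forall i j k x,
      sum3 (fun l => P l i x * partial l (P j k) x
                   + P l j x * partial l (P k i) x
                   + P l k x * partial l (P i j) x) = 0).

Definition kdelta (i j : idx) : R :=
  match i, j with
  | I0, I0 | I1, I1 | I2, I2 => 1
  | _, _ => 0
  end.

Definition gmetric (H : V -> R) (i j : idx) (x : V) : R :=
  partial i H x * partial j H x
  - kdelta i j * sum3 (fun k => partial k H x * partial k H x).

Definition vfield (P : idx -> idx -> V -> R) (H S : V -> R) (x : V) (i : idx) : R :=
  sum3 (fun j => P i j x * partial j H x)
  + sum3 (fun j => gmetric H i j x * partial j S x).

Definition equilibrium P H S x : Prop := forall i, vfield P H S x i = 0.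

Definition regular_equilibrium P H S x : Prop :=
  equilibrium P H S x /\ exists i j, P i j x <> 0.

Definition critical_point (H : V -> R) (x : V) : Prop :=
  forall i, partial i H x = 0.

(* The level sets of S and H through x are tangent at x:
   dS(x) and dH(x) are linearly dependent (dS /\ dH = 0 at x). *)
Definition level_sets_tangent (S H : V -> R) (x : V) : Prop :=
  exists a b : R, (a <> 0 \/ b <> 0) /\
    forall i, a * partial i S x + b * partial i H x = 0.

(* Main.v *)
Require Import Defs.
From Stdlib Require Import Reals Lra Psatz Classical.
From Coquelicot Require Import Coquelicot.
Open Scope R_scope.

Lemma alg (a b c h0 h1 h2 s0 s1 s2 : R) :
  a * s1 + b * s2 = 0 -> -a * s0 + c * s2 = 0 -> -b * s0 - c * s1 = 0 ->
  a * h1 + b * h2 + h0 * (h0*s0+h1*s1+h2*s2) - (h0*h0+h1*h1+h2*h2) * s0 = 0 ->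
  -a * h0 + c * h2 + h1 * (h0*s0+h1*s1+h2*s2) - (h0*h0+h1*h1+h2*h2) * s1 = 0 ->
  -b * h0 - c * h1 + h2 * (h0*s0+h1*s1+h2*s2) - (h0*h0+h1*h1+h2*h2) * s2 = 0 ->
  (a <> 0 \/ b <> 0 \/ c <> 0) ->
  (h0 = 0 /\ h1 = 0 /\ h2 = 0) \/ (s0 = 0 /\ s1 = 0 /\ s2 = 0) \/
  (s1 * h2 - s2 * h1 = 0 /\ s2 * h0 - s0 * h2 = 0 /\ s0 * h1 - s1 * h0 = 0).
Proof.
  intros A1 A2 A3 E0 E1 E2 Hp.
  set (p0 := - c). set (p1 := b). set (p2 := - a).
  assert (HL : exists l, s0 = l * p0 /\ s1 = l * p1 /\ s2 = l * p2).
  { unfold p0, p1, p2. destruct Hp as [Ha | [Hb | Hc]].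
    - exists (- s2 / a). repeat split.
      + apply (Rmult_eq_reg_l a); [|auto]. field_simplify; [lra|auto].
      + apply (Rmult_eq_reg_l a); [|auto]. field_simplify; [lra|auto].
      + field. auto.
    - exists (s1 / b). repeat split.
      + apply (Rmult_eq_reg_l b); [|auto]. field_simplify; [lra|auto].
      + field. auto.
      + apply (Rmult_eq_reg_l b); [|auto]. field_simplify; [lra|auto].
    - exists (- s0 / c). repeat split.
      + field. auto.
      + apply (Rmult_eq_reg_l c); [|auto]. field_simplify; [lra|auto].
      + apply (Rmult_eq_reg_l c); [|auto]. field_simplify; [lra|auto]. }
  destruct HL as [l [S0 [S1 S2]]].
  set (q0 := h1 * p2 - h2 * p1). set (q1 := h2 * p0 - h0 * p2). set (q2 := h0 * p1 - h1 * p0).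
  assert (K : (h0*h0+h1*h1+h2*h2) * (l * (q0*q0+q1*q1+q2*q2)) = 0).
  { set (e0 := a * h1 + b * h2 + h0 * (h0*s0+h1*s1+h2*s2) - (h0*h0+h1*h1+h2*h2) * s0) in *.
    set (e1 := -a * h0 + c * h2 + h1 * (h0*s0+h1*s1+h2*s2) - (h0*h0+h1*h1+h2*h2) * s1) in *.
    set (e2 := -b * h0 - c * h1 + h2 * (h0*s0+h1*s1+h2*s2) - (h0*h0+h1*h1+h2*h2) * s2) in *.
    set (m0 := q1 * h2 - q2 * h1). set (m1 := q2 * h0 - q0 * h2). set (m2 := q0 * h1 - q1 * h0).
    transitivity (- (m0 * e0 + m1 * e1 + m2 * e2)).
    - unfold m0, m1, m2, e0, e1, e2, q0, q1, q2. rewrite S0, S1, S2. unfold p0, p1, p2. ring.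
    - rewrite E0, E1, E2. ring. }
  destruct (classic (h0 = 0 /\ h1 = 0 /\ h2 = 0)) as [Hh|Hh]; [left; auto|right].
  assert (Hn : h0*h0+h1*h1+h2*h2 <> 0).
  { intro Z. apply Hh. repeat split; nra. }
  apply Rmult_integral in K. destruct K as [K|K]; [contradiction|].
  apply Rmult_integral in K. destruct K as [K|K].
  - left. rewrite S0, S1, S2, K. lra.
  - right. assert (q0 = 0 /\ q1 = 0 /\ q2 = 0) as [Q0 [Q1 Q2]] by (repeat split; nra).
    rewrite S0, S1, S2. repeat split.
    + transitivity (- l * q0); [unfold q0; ring | rewrite Q0; ring].
    + transitivity (- l * q1); [unfold q1; ring | rewrite Q1; ring].
    + transitivity (- l * q2); [unfold q2; ring | rewrite Q2; ring].
Qed.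

Theorem mainTheorem5 :
  forall (P : idx -> idx -> V -> R) (H S : V -> R),
    poisson_tensor P ->
    smooth H ->
    smooth S ->
    (forall x i, sum3 (fun j => P i j x * partial j S x) = 0) ->
    forall x : V,
      regular_equilibrium P H S x ->
      critical_point H x \/ level_sets_tangent S H x.
Proof.
  intros P H S [_ [Sk _]] _ _ PS x [Eq [i [j Pij]]].
  assert (D : forall i, P i i x = 0) by (intro k; pose proof (Sk k k x); lra).
  pose proof (PS x I0) as A1. pose proof (PS x I1) as A2. pose proof (PS x I2) as A3.
  pose proof (Eq I0) as E0. pose proof (Eq I1) as E1. pose proof (Eq I2) as E2.
  unfold vfield, gmetric, sum3, kdelta in *.
  rewrite !D in *.
  rewrite (Sk I1 I0 x), (Sk I2 I0 x), (Sk I2 I1 x) in *.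
  set (a := P I0 I1 x) in *. set (b := P I0 I2 x) in *. set (c := P I1 I2 x) in *.
  set (h0 := partial I0 H x) in *. set (h1 := partial I1 H x) in *. set (h2 := partial I2 H x) in *.
  set (s0 := partial I0 S x) in *. set (s1 := partial I1 S x) in *. set (s2 := partial I2 S x) in *.
  assert (Hp : a <> 0 \/ b <> 0 \/ c <> 0).
  { destruct i, j; rewrite ?D, ?(Sk I1 I0 x), ?(Sk I2 I0 x), ?(Sk I2 I1 x) in Pij;
    fold a b c in Pij; try (exfalso; apply Pij; reflexivity);
    try (left; auto; fail); try (right; left; auto; fail); try (right; right; auto; fail);
    try (left; intro Z; apply Pij; rewrite Z; ring);
    try (right; left; intro Z; apply Pij; rewrite Z; ring);
    try (right; right; intro Z; apply Pij; rewrite Z; ring). }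
  destruct (alg a b c h0 h1 h2 s0 s1 s2) as [[Z0 [Z1 Z2]] | [[Z0 [Z1 Z2]] | [C0 [C1 C2]]]];
    try lra; auto.
  - left. intro k; destruct k; assumption.
  - right. exists 1, 0. split; [lra|]. intro k; destruct k; fold s0 s1 s2 h0 h1 h2; lra.
  - right. destruct (classic (s0 = 0 /\ s1 = 0 /\ s2 = 0)) as [[Z0 [Z1 Z2]]|Hs].
    + exists 1, 0. split; [lra|]. intro k; destruct k; fold s0 s1 s2 h0 h1 h2; lra.
    + destruct (Req_dec s0 0) as [Z0|N0]; [destruct (Req_dec s1 0) as [Z1|N1]|].
      * assert (N2 : s2 <> 0) by tauto.
        exists h2, (- s2). split; [lra|]. intro k; destruct k; fold s0 s1 s2 h0 h1 h2; nra.
      * exists h1, (- s1). split; [lra|]. intro k; destruct k; fold s0 s1 s2 h0 h1 h2; nra.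
      * exists h0, (- s0). split; [lra|]. intro k; destruct k; fold s0 s1 s2 h0 h1 h2; nra.
Qed.
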